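(* Consider the following regulation game. A random triple $(\theta,s,d)$ (agent type, training state, deployment state) has joint distribution $\pi$. Prediction functions are vectors $f\in\mathbb{R}^n$. Given $s$ (and $\theta$), expected agent utility and expected principal welfare are $\overline{U}_\theta(f;s) = -(f-\bar u)'\overline{\Omega}_U(f-\bar u)$ and $\overline{W}(f;s) = -(f-\bar w)'\overline{\Omega}_W(f-\bar w)$, with $\bar u=\bar u(s,\theta)$, $\bar w=\bar w(s)\in\mathbb{R}^n$ and symmetric positive semidefinite weight matrices. The principal first (knowing only $\pi$) chooses a linear explainer, i.e. a $k\times n$ real matrix $\mathcal{E}$, and possibly an ex-ante restriction $\{f: Af=a\}$ with $A,a$ not depending on $s,\theta$; after observing $s$ she dictates the value $\mathcal{E}f=e(s)$ (failing the audit has infinite cost to the agent). The agent, knowing $\theta,s$, chooses $f$ maximizing $\overline{U}_\theta(f;s)$ subject to these constraints. For a random vector $\hat f=\hat f(s,\theta)\in\mathbb{R}^n$ and a symmetric positive definite matrix $\Omega$, the prediction explainer for $\hat f$ (with weight $\Omega$) is $$\mathcal{E}_0\in\arg\min_{\mathcal{E}\in\mathbb{R}^{k\times n}} \mathop{E}_\pi\big[(\hat f-\mathop{E}_\pi[\hat f\mid \mathcal{E}\hat f])'\,\Omega\,(\hat f-\mathop{E}_\pi[\hat f\mid \mathcal{E}\hat f])\big].$$ Assume $\overline{\Omega}_U$ is fixed (non-random) and of full rank, $\operatorname{rank}\mathop{E}_\pi[(\bar u-\bar w)(\bar u-\bar w)']\le k$, and $\operatorname{rank}\operatorname{Var}_\pi(\bar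 u-\bar w)=\operatorname{rank}\mathop{E}_\pi[(\bar u-\bar w)(\bar u-\bar w)']$. Then the optimal explainer achieving the first-best welfare outcome $f=\bar w$ (with $\overline{W}(f;s)\equiv 0$) is the prediction explainer for $\hat f=\bar u-\bar w$, with some full-rank weight matrix $\Omega$. *)

(* Defs.v *)
From HB Require Import structures.
From mathcomp Require Import all_boot all_order all_algebra.
From mathcomp Require Import all_classical all_reals all_analysis.
Set Implicit Arguments.
Unset Strict Implicit.
Unset Printing Implicit Defensive.
Import Order.TTheory GRing.Theory Num.Theory.
Import numFieldNormedType.Exports.
Local Open Scope classical_set_scope.
Local Open Scope ring_scope.

Section Defs.
Context (R : realType).

Definition qform (n : nat) (M : 'M[R]_n) (v : 'cV[R]_n) : R :=
  ((v^T *m M *m v) 0 0).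

Definition psd (n : nat) (M : 'M[R]_n) : Prop :=
  forall v : 'cV[R]_n, 0 <= qform M v.

Definition pd (n : nat) (M : 'M[R]_n) : Prop :=
  forall v : 'cV[R]_n, v != 0 -> 0 < qform M v.

Context (dT : measure_display) (T : measurableType dT) (P : probability T R).

Definition second_moment (n : nat) (x : T -> 'cV[R]_n) : 'M[R]_n :=
  \matrix_(i, j) fine (\int[P]_z ((x z i 0 * x z j 0)%:E)).

Definition mean_vec (n : nat) (x : T -> 'cV[R]_n) : 'cV[R]_n :=
  \col_i fine (\int[P]_z ((x z i 0)%:E)).

Definition variance_mx (n : nat) (x : T -> 'cV[R]_n) : 'M[R]_n :=
  second_moment x - mean_vec x *m (mean_vec x)^T.

Definition gen_sets (k : nat) (y : T -> 'cV[R]_k) : set (set T) :=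
  [set A | exists (j : 'I_k) (B : set R),
             measurable B /\ A = (fun z => y z j 0) @^-1` B].

Definition sigma_of (k : nat) (y : T -> 'cV[R]_k) : set (set T) :=
  <<s gen_sets y >>.

Definition is_cond_exp (n k : nat) (x : T -> 'cV[R]_n) (y : T -> 'cV[R]_k)
    (Y : T -> 'cV[R]_n) : Prop :=
  forall i : 'I_n,
    (forall B : set R, measurable B -> sigma_of y ((fun z => Y z i 0) @^-1` B))
    /\ P.-integrable setT (fun z => (Y z i 0)%:E)
    /\ (forall A, sigma_of y A ->
          (\int[P]_(z in A) (Y z i 0)%:E = \int[P]_(z in A) (x z i 0)%:E)%E).

Definition pred_loss (n : nat) (Om : 'M[R]_n) (fh Y : T -> 'cV[R]_n) : \bar R :=
  (\int[P]_z (qform Om (fh z - Y z))%:E)%E.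

(* E0 is a prediction explainer for fh with weight Om:
   E0 minimizes E[(fh - E[fh | E fh])' Om (fh - E[fh | E fh])] over all
   k x n matrices E (the loss does not depend on the version of the
   conditional expectation). *)
Definition prediction_explainer (n k : nat) (Om : 'M[R]_n) (fh : T -> 'cV[R]_n)
    (E0 : 'M[R]_(k, n)) : Prop :=
  exists Y0, is_cond_exp fh (fun z => E0 *m fh z) Y0 /\
    forall (E : 'M[R]_(k, n)) Y, is_cond_exp fh (fun z => E *m fh z) Y ->
      (pred_loss Om fh Y0 <= pred_loss Om fh Y)%E.

End Defs.

Section Game.
Context (R : realType).

Definition agent_util (n : nat) (OmU : 'M[R]_n) (ub f : 'cV[R]_n) : R :=
  - qform OmU (f - ub).

Definition best_response (n k : nat) (OmU : 'M[R]_n) (ub : 'cV[R]_n)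
    (E : 'M[R]_(k, n)) (e : 'cV[R]_k) (f : 'cV[R]_n) : Prop :=
  E *m f = e /\
  forall g : 'cV[R]_n, E *m g = e -> agent_util OmU ub g <= agent_util OmU ub f.

Definition first_best (n k : nat) (OmU : 'M[R]_n) (ub wb : 'cV[R]_n)
    (E : 'M[R]_(k, n)) (e : 'cV[R]_k) : Prop :=
  best_response OmU ub E e wb /\
  forall f, best_response OmU ub E e f -> f = wb.

End Game.

(* the random vector  ubar(s,theta) - wbar(s)  on triples z = ((theta,s),d) *)
Definition gapv (R : realType) (Th S D : Type) (n : nat)
    (ubar : S -> Th -> 'cV[R]_n) (wbar : S -> 'cV[R]_n) (z : Th * S * D) : 'cV[R]_n :=
  (ubar z.1.2 z.1.1 - wbar z.1.2)%R.

(* Main.v *)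
Require Import Defs.
From HB Require Import structures.
From mathcomp Require Import all_boot all_order all_algebra.
From mathcomp Require Import all_classical all_reals all_analysis.
From mathcomp Require Import ring lra measurable_realfun.
Import Order.TTheory GRing.Theory Num.Theory.
Import numFieldNormedType.Exports.
Local Open Scope classical_set_scope.
Local Open Scope ring_scope.
Section LinAlg.
Context (R : realType) (n : nat) (Om : 'M[R]_n).

Definition bil (a b : 'cV[R]_n) : R := (a^T *m Om *m b) 0 0.

Lemma qformE a : qform Om a = bil a a. Proof. by []. Qed.

Lemma bilDl a b c : bil (a + b) c = bil a c + bil b c.
Proof. by rewrite /bil linearD /= !mulmxDl mxE. Qed.

Lemma bilDr a b c : bil a (b + c) = bil a b + bil a c.
Proof. by rewrite /bil !mulmxDr mxE. Qed.

Lemma bilZr a t b : bil a (t *: b) = t * bil a b.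
Proof. by rewrite /bil -scalemxAr mxE. Qed.

Lemma bilZl a t b : bil (t *: a) b = t * bil a b.
Proof. by rewrite /bil linearZ /= -!scalemxAl mxE. Qed.

Lemma bilN a b : bil (- a) b = - bil a b.
Proof. by rewrite -scaleN1r bilZl mulN1r. Qed.

Hypothesis sym : Om^T = Om.

Lemma bilC a b : bil a b = bil b a.
Proof.
rewrite /bil -[in LHS](trmxK (a^T *m Om *m b)) [in LHS]mxE.
by rewrite !trmx_mul trmxK sym mulmxA.
Qed.

Lemma sqsumE (u : 'cV[R]_n) : (u^T *m u) 0 0 = \sum_i u i 0 ^+ 2.
Proof. by rewrite mxE; apply: eq_bigr => i _; rewrite mxE expr2. Qed.

Lemma sqsum_ge0 (u : 'cV[R]_n) : 0 <= (u^T *m u) 0 0.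
Proof. by rewrite sqsumE; apply: sumr_ge0 => i _; exact: sqr_ge0. Qed.

Lemma sqsum_eq0 (u : 'cV[R]_n) : (u^T *m u) 0 0 = 0 -> u = 0.
Proof.
rewrite sqsumE => /psumr_eq0P h; apply/matrixP => i j.
rewrite (ord1 j) mxE; apply/eqP; rewrite -sqrf_eq0; apply/eqP.
by apply: h => // k _; exact: sqr_ge0.
Qed.

Lemma pd_of : psd Om -> \rank Om = n -> pd Om.
Proof.
move=> ps rk v v0; rewrite lt_def ps andbT; apply/negP => /eqP q0.
set w := Om *m v.
have key t : 0 <= 2 * t * bil v w + t ^+ 2 * bil w w.
  have := ps (v + t *: w); rewrite qformE bilDl !bilDr !bilZr !bilZl.
  rewrite (bilC w v) -qformE q0.
  suff -> : 2 * t * bil v w + t ^+ 2 * bil w w = 0 + t * bil v w + (t * bil v w + t * (t * bil w w)) by [].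
  ring.
have b0 : 0 <= bil w w := ps w.
have a0 : bil v w = 0.
  move: key b0; move: (bil v w) (bil w w) => a b key b0.
  have hb : 0 < b + 1 by lra.
  have c0 : 0 < 1 / (b + 1) by apply: divr_gt0.
  have cb : 1 / (b + 1) * (b + 1) = 1 by rewrite mul1r mulVf // gt_eqF.
  have := key (- a * (1 / (b + 1))).
  move: c0 cb; move: (1 / (b + 1)) => c c0 cb h.
  have e : c * b = 1 - c by rewrite -cb; ring.
  have h2 : 0 <= - (a * a) * (c * (1 + c)).
    suff <- : 2 * (- a * c) * a + (- a * c) ^+ 2 * b = - (a * a) * (c * (1 + c)) by [].
    transitivity (-2 * (a * a) * c + (a * a) * c * (c * b)); first by ring.
    rewrite e; ring.
  have p : 0 < c * (1 + c) by apply: mulr_gt0 => //; lra.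
  move: h2 p; move: (c * (1 + c)) => q h2 p.
  have : a * a <= 0 by nra.
  move=> h3; have : a * a == 0 by rewrite eq_le h3 /=; rewrite -expr2; exact: sqr_ge0.
  by rewrite mulf_eq0 orbb => /eqP.
have Ov : Om *m v = 0.
  apply: sqsum_eq0; move: a0; rewrite /bil /w trmx_mul sym mulmxA => ->; done.
have uO : Om \in unitmx by rewrite -row_free_unit /row_free rk.
move/negP: v0; apply; apply/eqP.
by rewrite -(mulKmx uO v) Ov mulmx0.
Qed.

End LinAlg.
Arguments bil {R n} Om a b.
Arguments bilDl {R n} Om a b c.
Arguments bilDr {R n} Om a b c.
Arguments bilC {R n Om} sym a b.
Arguments pd_of {R n Om} sym _ _.

Section Expl.
Context (R : realType) (n k : nat) (Om M : 'M[R]_n).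

Definition Bm := row_base M.
Definition Gm := Bm *m Om *m Bm^T.
Definition E0m : 'M[R]_(k, n) := (pid_mx (\rank M) : 'M[R]_(k, \rank M)) *m Bm *m Om.
Definition Lm : 'M[R]_(n, k) :=
  Bm^T *m invmx Gm *m (pid_mx (\rank M) : 'M[R]_(\rank M, k)).

Hypotheses (sym : Om^T = Om) (pdO : pd Om) (hk : (\rank M <= k)%N).

Lemma pd_ge0 v : 0 <= qform Om v.
Proof.
have [->|v0] := eqVneq v 0; last exact/ltW/pdO.
by rewrite /qform mulmx0 mxE.
Qed.

Lemma pidK : (pid_mx (\rank M) : 'M[R]_(\rank M, k)) *m
   (pid_mx (\rank M) : 'M[R]_(k, \rank M)) = 1%:M.
Proof. by rewrite mul_pid_mx minnn (minn_idPr hk) pid_mx_1. Qed.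

Lemma Gunit : Gm \in unitmx.
Proof.
rewrite -row_free_unit -kermx_eq0; apply/eqP/row_matrixP => i; rewrite row0.
set u := row i (kermx Gm).
have uG : u *m Gm = 0 by rewrite /u -row_mul mulmx_ker row0.
set p := u *m Bm.
have p0 : p^T = 0.
  apply/eqP; apply/negPn/negP => /pdO; rewrite /qform trmxK.
  have -> : p *m Om *m p^T = u *m Gm *m u^T.
    by rewrite /p /Gm trmx_mul !mulmxA.
  by rewrite uG !mul0mx mxE ltxx.
have : u *m Bm = 0 *m Bm by rewrite mul0mx -/p -[p]trmxK p0 trmx0.
exact: (row_free_inj (row_base_free M)).
Qed.

Lemma recover (x : 'cV[R]_n) : (x^T <= M)%MS -> Lm *m (E0m *m x) = x.
Proof.
move=> hx; have /submxP [s hs] : (x^T <= Bm)%MS by rewrite /Bm eq_row_base.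
rewrite -[x]trmxK hs trmx_mul /Lm /E0m.
transitivity (Bm^T *m invmx Gm *m ((pid_mx (\rank M) : 'M[R]_(\rank M, k)) *m
   (pid_mx (\rank M) : 'M[R]_(k, \rank M))) *m (Gm *m s^T)).
  by rewrite /Gm /Bm !mulmxA.
by rewrite pidK mulmx1 mulmxA -(mulmxA Bm^T) (mulVmx Gunit) mulmx1.
Qed.

Lemma orth (x h : 'cV[R]_n) : (x^T <= M)%MS -> E0m *m h = 0 -> x^T *m Om *m h = 0.
Proof.
move=> hx Eh; have /submxP [s hs] : (x^T <= Bm)%MS by rewrite /Bm eq_row_base.
rewrite hs -[s]mulmx1 -pidK.
transitivity ((s *m (pid_mx (\rank M) : 'M[R]_(\rank M, k))) *m (E0m *m h)).
  by rewrite /E0m /Bm !mulmxA.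
by rewrite Eh mulmx0.
Qed.

Lemma first_best_of (u w : 'cV[R]_n) : ((u - w)^T <= M)%MS ->
  first_best Om u w E0m (E0m *m w).
Proof.
move=> uw.
have key g : E0m *m g = E0m *m w ->
    qform Om (g - u) = qform Om (w - u) + qform Om (g - w).
  move=> Eg.
  have Eh : E0m *m (g - w) = 0 by rewrite mulmxBr Eg subrr.
  have b0 : bil Om (w - u) (g - w) = 0.
    by rewrite -opprB bilN /bil (@orth (u - w) (g - w) uw Eh) mxE oppr0.
  have -> : g - u = (w - u) + (g - w) by rewrite [RHS]addrC addrA subrK.
  rewrite !qformE (bilDl Om (w - u) (g - w)) !(bilDr Om _ (w - u) (g - w)).
  by rewrite b0 (bilC sym (g - w)) b0 !add0r addr0.
split.
  split => // g Eg; rewrite /agent_util lerN2 (key g Eg).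
  by rewrite lerDl pd_ge0.
move=> f [Ef Hf].
have := Hf w erefl; rewrite /agent_util lerN2 (key f Ef) gerDl => h.
apply/eqP; rewrite -subr_eq0; apply/negPn/negP => /pdO.
by rewrite ltNge h.
Qed.

End Expl.

Section Prob.
Context (R : realType) (d : measure_display) (T : measurableType d)
  (P : probability T R) (n : nat) (x : T -> 'cV[R]_n).
Hypothesis mx : forall i, measurable_fun setT (fun z => x z i 0).
Hypothesis sqx : forall i, P.-integrable setT (fun z => (x z i 0 ^+ 2)%:E).

Lemma int1 i : P.-integrable setT (fun z => (x z i 0)%:E).
Proof.
apply: (@le_integrable _ _ _ _ _ measurableT _ (fun z => (1 + x z i 0 ^+ 2)%:E)).
- exact/measurable_realfun.measurable_EFinP.
- move=> z _; rewrite !abse_EFin lee_fin.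
  have h1 : 0 <= 1 + x z i 0 ^+ 2 by rewrite addr_ge0 // sqr_ge0.
  rewrite (ger0_norm h1).
  have := normr_ge0 (x z i 0); rewrite -[x z i 0 ^+ 2]real_normK ?num_real //.
  move: (`|x z i 0|) => a; nra.
- apply: (eq_integrable _ (fun z => (EFin \o cst 1) z + (x z i 0 ^+ 2)%:E)) => //.
  apply: integrableD => //; exact: finite_measure_integrable_cst.
Qed.

Lemma int2 i j : P.-integrable setT (fun z => (x z i 0 * x z j 0)%:E).
Proof.
apply: (@le_integrable _ _ _ _ _ measurableT _
   (fun z => (x z i 0 ^+ 2 + x z j 0 ^+ 2)%:E)).
- by apply/measurable_realfun.measurable_EFinP; apply: measurable_realfun.measurable_funM.
- move=> z _; rewrite !abse_EFin lee_fin.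
  have h1 : 0 <= x z i 0 ^+ 2 + x z j 0 ^+ 2 by rewrite addr_ge0 // sqr_ge0.
  rewrite (ger0_norm h1) normrM.
  rewrite -[x z i 0 ^+ 2]real_normK ?num_real // -[x z j 0 ^+ 2]real_normK ?num_real //.
  have := normr_ge0 (x z i 0); have := normr_ge0 (x z j 0).
  move: (`|x z i 0|) (`|x z j 0|) => a b; nra.
- apply: (eq_integrable _ (fun z => (x z i 0 ^+ 2)%:E + (x z j 0 ^+ 2)%:E)) => //.
  exact: integrableD.
Qed.

Lemma intsum (f : 'I_n -> T -> R) (c : 'I_n -> R) :
  (forall j, P.-integrable setT (fun z => (f j z)%:E)) ->
  P.-integrable setT (fun z => (\sum_j c j * f j z)%:E).
Proof.
move=> hf.
apply: (eq_integrable _ (fun z => \sum_j ((c j)%:E * (f j z)%:E)%E)) => //.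
  by move=> z _; rewrite -sumEFin; apply: eq_bigr => j _; rewrite EFinM.
by apply: integrable_sum => // j _; apply: integrableZl.
Qed.

Lemma mlin (c : 'I_n -> R) : measurable_fun setT (fun z => \sum_j c j * x z j 0).
Proof.
apply: measurable_sum => j; apply: measurable_realfun.measurable_funM => //; exact: measurable_cst.
Qed.

Lemma quad (v : 'cV[R]_n) :
  (\int[P]_z (((\sum_i v i 0 * x z i 0) ^+ 2)%:E))%E =
  ((v^T *m second_moment P x *m v) 0 0)%:E.
Proof.
have e z : (\sum_i v i 0 * x z i 0) ^+ 2 =
    \sum_i \sum_j (v i 0 * v j 0) * (x z i 0 * x z j 0).
  rewrite expr2 mulr_suml; apply: eq_bigr => i _; rewrite mulr_sumr.
  by apply: eq_bigr => j _; ring.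
under eq_integral do rewrite e -sumEFin.
rewrite (@integral_sum _ _ _ P setT measurableT 'I_n
  (fun i z => (\sum_j v i 0 * v j 0 * (x z i 0 * x z j 0))%:E)); last first.
  by move=> i; apply: intsum => j; exact: int2.
transitivity (\sum_i (\sum_j ((v i 0 * v j 0) * second_moment P x i j))%:E)%E.
  apply: eq_bigr => i _.
  under eq_integral do rewrite -sumEFin.
  rewrite -sumEFin (@integral_sum _ _ _ P setT measurableT 'I_n
    (fun j z => (v i 0 * v j 0 * (x z i 0 * x z j 0))%:E)); last first.
    move=> j; apply: (eq_integrable _ (fun z => (v i 0 * v j 0)%:E * (x z i 0 * x z j 0)%:E)%E) => //.
    by apply: integrableZl => //; exact: int2.
  apply: eq_bigr => j _.
  under eq_integral do rewrite EFinM.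
  rewrite integralZl //; last exact: int2.
  by rewrite [RHS]EFinM /second_moment mxE fineK // (integrable_fin_num _ (int2 i j)).
rewrite sumEFin; congr (_%:E).
rewrite mxE exchange_big; apply: eq_bigr => j _.
rewrite mxE mulr_suml; apply: eq_bigr => i _; rewrite !mxE; ring.
Qed.

Lemma ae_range : {ae P, forall z, ((x z)^T <= second_moment P x)%MS}.
Proof.
set M := second_moment P x; set C := cokermx M.
have hj (j : 'I_n) : {ae P, forall z, ((x z)^T *m C) 0 j = 0}.
  set v := col j C.
  have Mv : M *m v = 0.
    apply/matrixP => i l; rewrite (ord1 l) !mxE.
    have := congr1 (fun A : 'M[R]_n => A i j) (mulmx_coker M); rewrite !mxE => h.
    by apply: (eq_trans _ h); apply: eq_bigr => a _; rewrite !mxE.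
  have q0 : (\int[P]_z (((\sum_i v i 0 * x z i 0) ^+ 2)%:E))%E = 0%E.
    by rewrite quad -mulmxA Mv mulmx0 mxE.
  have mf : measurable_fun setT (fun z => ((\sum_i v i 0 * x z i 0) ^+ 2)%:E).
    apply/measurable_realfun.measurable_EFinP.
    apply: measurable_realfun.measurable_funX; exact: mlin.
  have := (ae_eq_integral_abs P measurableT mf).1.
  have -> : (\int[P]_(z in setT) `|((\sum_i v i 0 * x z i 0) ^+ 2)%:E|)%E =
      (\int[P]_z (((\sum_i v i 0 * x z i 0) ^+ 2)%:E))%E.
    by apply: eq_integral => z _; rewrite gee0_abs // lee_fin sqr_ge0.
  move=> /(_ q0); apply: filterS => z /(_ I) /= /eqP; rewrite eqe sqrf_eq0 => /eqP h.
  rewrite -h mxE; apply: eq_bigr => i _; rewrite !mxE mulrC.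
  done.
have := filter_forall (ae_filter_ringOfSetsType P) hj; apply: filterS => z hz.
rewrite submxE; apply/eqP/matrixP => i j; rewrite (ord1 i) hz [RHS]mxE //.
Qed.

End Prob.

Section Sigma.
Context (R : realType) (d : measure_display) (T : measurableType d) (k : nat)
  (y : T -> 'cV[R]_k).

Lemma sigma_meas (c : 'I_k -> R) (B : set R) : measurable B ->
  sigma_of y ((fun z => \sum_j c j * y z j 0) @^-1` B).
Proof.
move=> mB.
have mf : measurable_fun (setT : set (g_sigma_algebraType (gen_sets y)))
    (fun z => \sum_j c j * y z j 0).
  apply: measurable_sum => j; apply: measurable_funM.
    exact: measurable_cst.
  move=> _ Y mY; rewrite setTI; apply: sub_gen_smallest; by exists j, Y.
have := mf measurableT B mB; rewrite setTI; exact.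
Qed.

Lemma sigma_sub : (forall j, measurable_fun setT (fun z => y z j 0)) ->
  forall A, sigma_of y A -> measurable A.
Proof.
move=> my A; apply: smallest_sub; first exact: sigma_algebra_measurable.
move=> _ [j [B [mB ->]]]; have := my j measurableT B mB; rewrite setTI; exact.
Qed.

End Sigma.

Lemma mqform (R : realType) (d : measure_display) (T : measurableType d)
  (n : nat) (Om : 'M[R]_n) (v : T -> 'cV[R]_n) :
  (forall i, measurable_fun setT (fun z => v z i 0)) ->
  measurable_fun setT (fun z => qform Om (v z)).
Proof.
move=> mv.
have -> : (fun z => qform Om (v z)) =
    (fun z => \sum_j (\sum_i v z i 0 * Om i j) * v z j 0).
  apply/funext => z; rewrite /qform mxE; apply: eq_bigr => j _; rewrite mxE.
  by congr (_ * _); apply: eq_bigr => i _; rewrite mxE.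
apply: measurable_sum => j; apply: measurable_funM; last exact: mv.
apply: measurable_sum => i; apply: measurable_funM; first exact: mv.
exact: measurable_cst.
Qed.

Theorem proposition2 (R : realType)
  (dTh dS dD : measure_display)
  (Th : measurableType dTh) (S : measurableType dS) (D : measurableType dD)
  (pi : probability (Th * S * D)%type R)
  (n k : nat) (OmU : 'M[R]_n)
  (ubar : S -> Th -> 'cV[R]_n) (wbar : S -> 'cV[R]_n) :
  OmU^T = OmU -> psd OmU -> \rank OmU = n ->
  (forall i : 'I_n, measurable_fun setT (fun z : Th * S * D => ubar z.1.2 z.1.1 i 0)) ->
  (forall i : 'I_n, measurable_fun setT (fun z : Th * S * D => wbar z.1.2 i 0)) ->
  (forall i : 'I_n, pi.-integrable setT
      (fun z : Th * S * D => ((gapv ubar wbar z i 0) ^+ 2)%:E)) ->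
  (\rank (second_moment pi (@gapv R Th S D n ubar wbar))
     <= k)%N ->
  \rank (variance_mx pi (@gapv R Th S D n ubar wbar))
    = \rank (second_moment pi (@gapv R Th S D n ubar wbar)) ->
  exists Om : 'M[R]_n, Om^T = Om /\ pd Om /\
    exists E0 : 'M[R]_(k, n),
      prediction_explainer pi Om
        (@gapv R Th S D n ubar wbar) E0 /\
      exists e : S -> 'cV[R]_k,
        {ae pi, forall z : Th * S * D,
           first_best OmU (ubar z.1.2 z.1.1) (wbar z.1.2) E0 (e z.1.2)}.
Proof.
move=> sym ps rk mu mw sq hk _.
pose x := @gapv R Th S D n ubar wbar.
have mx : forall i, measurable_fun setT (fun z => x z i 0).
  move=> i; have -> : (fun z => x z i 0) =
      (fun z => ubar z.1.2 z.1.1 i 0) \- (fun z => wbar z.1.2 i 0).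
    by apply/funext => z; rewrite /x /gapv !mxE.
  exact: measurable_funB.
have pdO : pd OmU := pd_of sym ps rk.
pose M := second_moment pi x.
have hae := @ae_range _ _ _ pi _ x mx sq.
pose E0 := @E0m R n k OmU M.
pose L := @Lm R n k OmU M.
have rec z : ((x z)^T <= M)%MS -> L *m (E0 *m x z) = x z.
  by move=> hz; apply: recover.
have mE j : measurable_fun setT (fun z => (E0 *m x z) j 0).
  have -> : (fun z => (E0 *m x z) j 0) = (fun z => \sum_l E0 j l * x z l 0).
    by apply/funext => z; rewrite mxE.
  exact: mlin.
exists OmU; split => //; split => //.
exists E0; split.
  pose Y0 := fun z => L *m (E0 *m x z).
  have eY i : (fun z => Y0 z i 0) = (fun z => \sum_l (L *m E0) i l * x z l 0).
    by apply/funext => z; rewrite /Y0 mulmxA mxE.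
  have mY i : measurable_fun setT (fun z => Y0 z i 0) by rewrite eY; exact: mlin.
  exists Y0; split.
    move=> i; split; [|split].
    - move=> B mB.
      have -> : (fun z => Y0 z i 0) = (fun z => \sum_j L i j * (E0 *m x z) j 0).
        by apply/funext => z; rewrite /Y0 mxE.
      exact: sigma_meas.
    - have -> : (fun z => (Y0 z i 0)%:E) =
          (fun z => (\sum_l (L *m E0) i l * x z l 0)%:E).
        by apply/funext => z; rewrite /Y0 mulmxA mxE.
      by apply: intsum => l; exact: int1.
    - move=> A sA.
      have mA : measurable A by exact: (@sigma_sub _ _ _ _ _ mE).
      apply: ae_eq_integral => //.
      + by apply/measurable_EFinP; apply: measurable_funTS; exact: mY.
      + by apply/measurable_EFinP; apply: measurable_funTS; exact: mx.
      + by apply: filterS hae => z hz _; rewrite /Y0 rec.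
  move=> E Y _.
  have -> : pred_loss pi OmU x Y0 = 0%E.
    rewrite /pred_loss (ae_eq_integral (cst 0%E)) ?integral0 //.
    + apply/measurable_EFinP; apply: mqform => i.
      have -> : (fun z => (x z - Y0 z) i 0) = (fun z => x z i 0) \- (fun z => Y0 z i 0).
        by apply/funext => z /=; rewrite [LHS]mxE; congr (_ + _); rewrite [LHS]mxE.
      exact: measurable_funB.
    + apply: filterS hae => z hz _. by rewrite /Y0 rec // subrr /qform mulmx0 mxE.
  by apply: integral_ge0 => z _; rewrite lee_fin; exact: pd_ge0.
exists (fun s => E0 *m wbar s).
by apply: filterS hae => z hz; apply: first_best_of.
Qed.
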